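(* Let $s=0$ and $\lambda\in\mathbb{C}$. Every odd superderivation of $\mathfrak{L}^0_\lambda$ of degree $0$ is inner; more precisely, it equals $\mathrm{ad}(aG_0+bH_0)$ for some $a,b\in\mathbb{C}$.
   Context: For $s\in\{0,\tfrac12\}$ and $\lambda\in\mathbb{C}$, $\mathfrak{L}^s_\lambda$ is the complex Lie superalgebra with basis $\{L_m,I_m,G_p,H_p : m\in\mathbb{Z},\ p\in s+\mathbb{Z}\}$, even part spanned by the $L_m,I_m$, odd part spanned by the $G_p,H_p$, and brackets $[L_m,L_n]=(m-n)L_{m+n}$, $[L_m,I_n]=(m-n)I_{m+n}$, $[L_m,H_p]=(\tfrac m2-p)H_{m+p}$, $[L_m,G_p]=(\tfrac m2-p)G_{m+p}+\lambda(m+1)H_{m+p}$, $[I_m,G_p]=(m-2p)H_{m+p}$, $[G_p,G_q]=I_{p+q}$, plus those given by super-antisymmetry $[y,x]=-(-1)^{|x||y|}[x,y]$; all other brackets of basis elements are zero. $\mathfrak{L}_r$ is spanned by basis elements of index $r$. A superderivation of parity $a$ is a linear map $D$ shifting parity by $a$ with $D([x,y])=[D(x),y]+(-1)^{a|x|}[x,D(y)]$ for homogeneous $x,y$; it has degree $r$ if $D(\mathfrak{L}_q)\subset\mathfrak{L}_{q+r}$. $\mathrm{ad}\,x(y)=[x,y]$. *)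

(* Defs.v *)
From HB Require Import structures.
From mathcomp Require Import all_boot all_order all_algebra.
Set Implicit Arguments. Unset Strict Implicit. Unset Printing Implicit Defensive.
Import Order.TTheory GRing.Theory Num.Theory.
Local Open Scope ring_scope.

(* The four families of basis vectors of L^0_lambda (s = 0, so every index
   lies in Z):  kL ~ L_m, kI ~ I_m, kG ~ G_p, kH ~ H_p. *)
Inductive kind := kL | kI | kG | kH.

Definition kind_eqb (a b : kind) : bool :=
  match a, b with
  | kL, kL | kI, kI | kG, kG | kH, kH => true
  | _, _ => false
  end.

Lemma kind_eqP : Equality.axiom kind_eqb.
Proof. by case; case; constructor. Qed.

HB.instance Definition _ := hasDecEq.Build kind kind_eqP.

Definition basis := (kind * int)%type.

Definition bodd (b : basis) : bool :=
  match b.1 with kG | kH => true | _ => false end.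

(* Elements of the algebra are given as finite formal linear combinations
   (lists of (coefficient, basis element)); [coef v c] is the coefficient of
   the basis element c in v. *)
Definition elt (F : fieldType) := seq (F * basis).

Definition coef (F : fieldType) (v : elt F) (c : basis) : F :=
  \sum_(p <- v | p.2 == c) p.1.

Definition scl (F : fieldType) (a : F) (v : elt F) : elt F :=
  [seq (a * p.1, p.2) | p <- v].

Definition br (F : fieldType) (lam : F) (x y : basis) : elt F :=
  let: (kx, m) := x in
  let: (ky, n) := y in
  let half (a b : int) : F := a%:~R / 2%:R - b%:~R in
  match kx, ky with
  | kL, kL => [:: ((m - n)%:~R, (kL, m + n))]
  | kL, kI => [:: ((m - n)%:~R, (kI, m + n))]
  | kI, kL => [:: (- (n - m)%:~R, (kI, m + n))]
  | kL, kH => [:: (half m n, (kH, m + n))]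
  | kH, kL => [:: (- half n m, (kH, m + n))]
  | kL, kG => [:: (half m n, (kG, m + n)); (lam * (m + 1)%:~R, (kH, m + n))]
  | kG, kL => [:: (- half n m, (kG, m + n)); (- (lam * (n + 1)%:~R), (kH, m + n))]
  | kI, kG => [:: ((m - 2 * n)%:~R, (kH, m + n))]
  | kG, kI => [:: (- (n - 2 * m)%:~R, (kH, m + n))]
  | kG, kG => [:: (1, (kI, m + n))]
  | _, _ => [::]
  end.

Definition linext (F : fieldType) (D : basis -> elt F) (v : elt F) : elt F :=
  flatten [seq scl p.1 (D p.2) | p <- v].

Definition brEB (F : fieldType) (lam : F) (v : elt F) (y : basis) : elt F :=
  flatten [seq scl p.1 (br lam p.2 y) | p <- v].
Definition brBE (F : fieldType) (lam : F) (x : basis) (v : elt F) : elt F :=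
  flatten [seq scl p.1 (br lam x p.2) | p <- v].

Definition odd_superder_deg0 (F : fieldType) (lam : F) (D : basis -> elt F) :
  Prop :=
  [/\
      (forall b c, bodd c = bodd b -> coef (D b) c = 0),
      (forall b c, c.2 != b.2 -> coef (D b) c = 0) &
      (* super Leibniz rule with parity a = 1 *)
      (forall x y c,
         coef (linext D (br lam x y)) c =
         coef (brEB lam (D x) y) c
         + (-1) ^+ bodd x * coef (brBE lam x (D y)) c)].

(* Main.v *)
Require Import Defs.
From HB Require Import structures.
From mathcomp Require Import all_boot all_order all_algebra.
From mathcomp Require Import ring.
Import GRing.Theory.
Local Open Scope ring_scope.

Lemma coef_nil (F : fieldType) c : coef ([::] : elt F) c = 0.
Proof. by rewrite /coef big_nil. Qed.
Lemma coef_cons (F : fieldType) (p : F * basis) v c :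
  coef (p :: v) c = (if p.2 == c then p.1 else 0) + coef v c.
Proof. by rewrite /coef big_cons; case: ifP => _; rewrite ?add0r. Qed.

Lemma coef_cat (F : fieldType) (v w : elt F) c : coef (v ++ w) c = coef v c + coef w c.
Proof. rewrite /coef. rewrite big_cat. by []. Qed.
Lemma coef_scl (F : fieldType) a (v : elt F) c : coef (scl a v) c = a * coef v c.
Proof.
elim: v => [|p v IH]; first by rewrite /scl /= !coef_nil mulr0.
by rewrite /scl /= !coef_cons -/(scl a v) IH mulrDr; case: ifP => _; rewrite ?mulr0.
Qed.
Lemma coef_flat (F : fieldType) (f : basis -> elt F) (v : elt F) c :
  coef (flatten [seq scl p.1 (f p.2) | p <- v]) c = \sum_(p <- v) p.1 * coef (f p.2) c.
Proof.
elim: v => [|p v IH]; first by rewrite big_nil coef_nil.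
by rewrite /= coef_cat coef_scl IH big_cons.
Qed.

Lemma coef_lin (F : fieldType) (v : elt F) (f : basis -> F) (S : seq basis) :
  uniq S -> (forall b, b \notin S -> f b = 0) ->
  \sum_(p <- v) p.1 * f p.2 = \sum_(b <- S) coef v b * f b.
Proof.
move=> uS hS; elim: v => [|p v IH].
  by rewrite big_nil; under eq_bigr do rewrite coef_nil mul0r; rewrite big1.
rewrite big_cons IH.
under [in RHS]eq_bigr do rewrite coef_cons mulrDl.
rewrite big_split /=; congr (_ + _).
case: (boolP (p.2 \in S)) => hp.
  rewrite (bigD1_seq p.2) //= eqxx big1 ?addr0 // => b /negPf nb.
  by rewrite eq_sym nb mul0r.
rewrite hS // mulr0 big1_seq // => b /andP [_ hb].
by case: eqP => [e|]; [rewrite e hb in hp| rewrite mul0r].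
Qed.

Lemma addKr' (m n : int) : m + n - m = n.
Proof. by rewrite addrC addKr. Qed.

Definition kinds := [:: kL; kI; kG; kH].

Lemma br_idx (F : fieldType) (lam : F) (x y c : basis) :
  c.2 != x.2 + y.2 -> coef (br lam x y) c = 0.
Proof.
case: x => kx m; case: y => ky n; case: c => kc q /= hq.
have h : forall k, (k, m + n) == (kc, q) = false.
  by move=> k; rewrite xpair_eqE (eq_sym (m + n)) (negPf hq) andbF.
by case: kx; case: ky; rewrite /= ?coef_nil // !coef_cons ?h ?coef_nil ?addr0.
Qed.

Lemma coef_brEB (F : fieldType) (lam : F) v (y c : basis) :
  coef (brEB lam v y) c = \sum_(k <- kinds) coef v (k, c.2 - y.2) * coef (br lam (k, c.2 - y.2) y) c.
Proof.
rewrite /brEB (@coef_flat _ (fun b => br lam b y)) (@coef_lin _ _ (fun b => coef (br lam b y) c) [seq (k, c.2 - y.2) | k <- kinds]).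
- by rewrite big_map.
- by [].
- case=> k i hb; apply: br_idx => /=; apply: contra hb => /eqP ->.
  rewrite addrK; case: k => /=.
 all: by rewrite !inE eqxx ?orbT.
Qed.

Lemma coef_brBE (F : fieldType) (lam : F) v (x c : basis) :
  coef (brBE lam x v) c = \sum_(k <- kinds) coef v (k, c.2 - x.2) * coef (br lam x (k, c.2 - x.2)) c.
Proof.
rewrite /brBE (@coef_flat _ (fun b => br lam x b)) (@coef_lin _ _ (fun b => coef (br lam x b) c) [seq (k, c.2 - x.2) | k <- kinds]).
- by rewrite big_map.
- by [].
- case=> k i hb; apply: br_idx => /=; apply: contra hb => /eqP ->.
  rewrite addKr'; case: k => /=.
  all: by rewrite !inE eqxx ?orbT.
Qed.

Lemma coef_linext (F : fieldType) (D : basis -> elt F) v c :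
  coef (linext D v) c = \sum_(p <- v) p.1 * coef (D p.2) c.
Proof. exact: coef_flat. Qed.


Lemma eqkind_simp (k k' : kind) (i : int) : ((k, i) == (k', i)) = (k == k').
Proof. by rewrite xpair_eqE eqxx andbT. Qed.

Ltac ev := rewrite ?coef_brEB ?coef_brBE ?coef_linext /= ?addrK ?addKr' ?subrr ?subr0 ?add0r ?addr0 !big_cons ?big_nil /=;
  rewrite ?coef_cons ?coef_nil ?eqkind_simp /=.


Lemma intr_nz (F : fieldType) (hF : [pchar F] =i pred0) (z : int) : z != 0 -> (z%:~R : F) != 0.
Proof.
have h := (pcharf0P F).1 hF.
case: z => n.
  by rewrite /= -[(Posz n)%:~R]/(n%:R) h => hn; apply: contra hn => /eqP ->.
by rewrite NegzE rmorphN /= oppr_eq0 -[(Posz n.+1)%:~R]/(n.+1%:R) h.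
Qed.

Lemma from_eq (F : fieldType) (l r l' r' k : F) : l' = r' -> l - r = k * (l' - r') -> l = r.
Proof. by move=> -> e; apply/subr0_eq; rewrite e subrr mulr0. Qed.

Section Main.
Variables (F : fieldType) (hF : [pchar F] =i pred0) (lam : F) (D : basis -> elt F).
Hypothesis hpar : forall b c, bodd c = bodd b -> coef (D b) c = 0.
Hypothesis hdeg : forall b c, c.2 != b.2 -> coef (D b) c = 0.
Hypothesis hL : forall x y c,
         coef (linext D (br lam x y)) c =
         coef (brEB lam (D x) y) c
         + (-1) ^+ bodd x * coef (brBE lam x (D y)) c.

Local Notation A m := (coef (D (kL,m)) (kG,m)).
Local Notation B m := (coef (D (kL,m)) (kH,m)).
Local Notation C m := (coef (D (kI,m)) (kG,m)).
Local Notation E m := (coef (D (kI,m)) (kH,m)).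
Local Notation P m := (coef (D (kG,m)) (kL,m)).
Local Notation Q m := (coef (D (kG,m)) (kI,m)).
Local Notation R m := (coef (D (kH,m)) (kL,m)).
Local Notation S m := (coef (D (kH,m)) (kI,m)).

Lemma z1 (m : int) : coef (D (kL,m)) (kL,m) = 0. Proof. exact: hpar. Qed.
Lemma z2 (m : int) : coef (D (kL,m)) (kI,m) = 0. Proof. exact: hpar. Qed.
Lemma z3 (m : int) : coef (D (kI,m)) (kL,m) = 0. Proof. exact: hpar. Qed.
Lemma z4 (m : int) : coef (D (kI,m)) (kI,m) = 0. Proof. exact: hpar. Qed.
Lemma z5 (m : int) : coef (D (kG,m)) (kG,m) = 0. Proof. exact: hpar. Qed.
Lemma z6 (m : int) : coef (D (kG,m)) (kH,m) = 0. Proof. exact: hpar. Qed.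
Lemma z7 (m : int) : coef (D (kH,m)) (kG,m) = 0. Proof. exact: hpar. Qed.
Lemma z8 (m : int) : coef (D (kH,m)) (kH,m) = 0. Proof. exact: hpar. Qed.

Ltac evz := ev; rewrite ?z1 ?z2 ?z3 ?z4 ?z5 ?z6 ?z7 ?z8.


Lemma nz2 : (2 : F) != 0.
Proof. by have := @intr_nz F hF 2 isT. Qed.

Ltac fld := field; rewrite ?nz2 //.

Lemma lin1 (c : F) {x y l1 r1 : F} (e1 : l1 = r1) : x - y = c * (l1 - r1) -> x = y.
Proof. exact: from_eq. Qed.

Lemma nzh (z : int) (f : F) : f = z%:~R / 2 -> z != 0 -> f != 0.
Proof. by move=> -> hz; rewrite mulf_neq0 ?invr_eq0 ?nz2 ?intr_nz. Qed.
Lemma nzi (z : int) (f : F) : f = z%:~R -> z != 0 -> f != 0.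
Proof. by move=> -> hz; rewrite intr_nz. Qed.
Lemma cancel0 {x y : F} : x * y = 0 -> y != 0 -> x = 0.
Proof. by move/eqP; rewrite mulf_eq0 => /orP [/eqP //| /eqP -> /eqP]. Qed.

Lemma eR (m n : int) : R m * (m%:~R / 2 - n%:~R) = 0.
Proof.
have := hL (kH, m) (kG, n) (kG, m + n); evz => e.
apply: (lin1 (-1) e); fld.
Qed.

Lemma eRSP (m n : int) : R m * (lam * (m + 1)%:~R) + S m * (m - 2 * n)%:~R + P n * (n%:~R / 2 - m%:~R) = 0.
Proof.
have := hL (kH, m) (kG, n) (kH, m + n); evz => e.
apply: (lin1 (-1) e); fld.
Qed.

Lemma solve_nz {x y z : F} : (x - y) * z = 0 -> z != 0 -> x = y.
Proof. by move=> h hz; apply/subr0_eq; apply: cancel0 h hz. Qed.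

Lemma R0 (m : int) : R m = 0.
Proof.
have [->|hm] := eqVneq m 0.
  apply: (cancel0 (eR 0 1)); apply: (@nzi (-1)) => //; fld.
apply: (cancel0 (eR m 0)); apply: (@nzh m) => //; fld.
Qed.

Lemma eSP (m n : int) : S m * (m - 2 * n)%:~R + P n * (n%:~R / 2 - m%:~R) = 0.
Proof. by have := eRSP m n; rewrite R0 mul0r add0r. Qed.

Lemma Pn (n : int) : n != 0 -> P n = 0.
Proof.
move=> hn; have e := eSP (2 * n) n.
have h : P n * (n%:~R / 2 - (2 * n)%:~R) = 0 by apply: (lin1 1 e); fld.
apply: (cancel0 h); apply: (@nzh (- 3 * n)); first fld.
by rewrite mulf_eq0 negb_or hn.
Qed.

Lemma S0 (m : int) : S m = 0.
Proof.
have [->|hm] := eqVneq m 2.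
  have e := eSP 2 (-1); rewrite Pn // mul0r addr0 in e.
  by apply: (cancel0 e); apply: (@nzi 4).
have e := eSP m 1; rewrite Pn // mul0r addr0 in e.
apply: (cancel0 e); apply: (@nzi (m - 2)) => //.
by rewrite subr_eq0.
Qed.

Lemma P0 (n : int) : P n = 0.
Proof.
have [->|hn] := eqVneq n 0; last exact: Pn.
have e := eSP 1 0; rewrite S0 mul0r add0r in e.
by apply: (cancel0 e); apply: (@nzi (-1)) => //; fld.
Qed.

Lemma eQ (m n : int) : (m%:~R / 2 - n%:~R) * Q (m + n) = A m + Q n * (m - n)%:~R.
Proof.
have := hL (kL, m) (kG, n) (kI, m + n); evz; rewrite S0 P0 => e.
apply: (lin1 1 e); fld.
Qed.

Lemma lin4 (c1 c2 c3 c4 : F) {x l1 r1 l2 r2 l3 r3 l4 r4 : F}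
  (e1 : l1 = r1) (e2 : l2 = r2) (e3 : l3 = r3) (e4 : l4 = r4) :
  x = c1 * (l1 - r1) + c2 * (l2 - r2) + c3 * (l3 - r3) + c4 * (l4 - r4) -> x = 0.
Proof. by rewrite e1 e2 e3 e4 !subrr !mulr0 !addr0. Qed.

Lemma Qc (k : int) : Q k = Q 0.
Proof.
have [->|hk] := eqVneq k 0; first by [].
have e1 := eQ k 0; rewrite addr0 in e1.
have e2 := eQ k (- k); rewrite subrr in e2.
have e3 := eQ (- k) 0; rewrite addr0 in e3.
have e4 := eQ (- k) k; rewrite addNr in e4.
apply: (solve_nz (z := k%:~R * 15 / 2)).
  apply: (lin4 (-1) 1 (-4) 4 e1 e2 e3 e4); fld.
apply: (@nzh (k * 15)); first fld.
by rewrite mulf_eq0 negb_or hk.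
Qed.

Lemma Af (m : int) : A m = - (m%:~R / 2) * Q 0.
Proof.
have e := eQ m 0; rewrite addr0 (Qc m) in e.
apply: (lin1 (-1) e); fld.
Qed.

Lemma Cf (n : int) : C n = 0.
Proof.
have := hL (kG, 0) (kG, n) (kG, n); evz; rewrite !P0 => e.
apply: (lin1 1 e); fld.
Qed.

Lemma Ef (n : int) : E n = - n%:~R * Q 0.
Proof.
have := hL (kG, 0) (kG, n) (kH, n); evz; rewrite !P0 Qc => e.
apply: (lin1 1 e); fld.
Qed.

Definition fb (m : int) := B m + Q 0 * lam * (m + 1)%:~R.

Lemma hf (m n : int) :
  2 * (m - n)%:~R * fb (m + n) = (2 * m - n)%:~R * fb m + (m - 2 * n)%:~R * fb n.
Proof.
have := hL (kL, m) (kL, n) (kH, m + n); evz; rewrite !Af => e.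
rewrite /fb; apply: (lin1 2 e); fld.
Qed.

Lemma fb0 : fb 0 = 0.
Proof.
have e := hf 1 0; rewrite addr0 in e.
apply: (lin1 (-1) e); fld.
Qed.

Lemma fbN (k : int) : fb (- k) = - fb k.
Proof.
have [->|hk] := eqVneq k 0; first by rewrite oppr0 fb0 oppr0.
have e := hf k (- k); rewrite subrr fb0 in e.
apply: (solve_nz (z := (3 * k)%:~R)).
  apply: (lin1 (-1) e); fld.
by apply: intr_nz => //; rewrite mulf_eq0 negb_or hk.
Qed.

Lemma fb2 : fb 2 = 2 * fb 1.
Proof.
have e := hf 2 (-1); rewrite (_ : (2 + -1 : int) = 1) // fbN in e.
apply: (solve_nz (z := 5)).
  apply: (lin1 (-1) e); fld.
exact: (@intr_nz F hF 5).
Qed.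

Lemma fbnat (k : nat) : fb (k%:Z + 2) = (k%:Z + 2)%:~R * fb 1.
Proof.
elim: k => [|k IH]; first by rewrite add0r fb2.
have e := hf (k%:Z + 2) 1; rewrite IH in e.
rewrite (_ : Posz k.+1 + 2 = k%:Z + 2 + 1); last by rewrite -addn1 PoszD addrAC.
apply: (solve_nz (z := (2 * (k%:Z + 1))%:~R)).
  apply: (lin1 1 e); fld.
apply: intr_nz => //; rewrite mulf_eq0 negb_or /=.
by rewrite -PoszD addn1.
Qed.

Lemma fbpos (k : nat) : fb k%:Z = k%:Z%:~R * fb 1.
Proof.
case: k => [|[|k]]; first by rewrite fb0 mul0r.
  by rewrite mul1r.
have := fbnat k; rewrite -PoszD addn2 => ->; by [].
Qed.

Lemma fbint (m : int) : fb m = m%:~R * fb 1.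
Proof.
case: m => k; first exact: fbpos.
by rewrite NegzE fbN fbpos intrN mulNr.
Qed.

Lemma main_sec : exists a b : F, forall (x c : basis),
    coef (D x) c = a * coef (br lam (kG, 0%Z) x) c + b * coef (br lam (kH, 0%Z) x) c.
Proof.
exists (Q 0), (-2 * fb 1); case=> kx m [kc q].
have [->|hq] := eqVneq q m; last first.
  by rewrite hdeg ?br_idx ?mulr0 ?addr0 //= add0r.
case: kx; case: kc; rewrite /= ?coef_cons ?coef_nil ?add0r ?eqkind_simp /= ?mulr0 ?addr0 ?add0r.
all: try (exact: hpar).
- by rewrite Af; fld.
- have -> : B m = fb m - Q 0 * lam * (m + 1)%:~R by rewrite /fb addrK.
  rewrite fbint; fld.
- exact: Cf.
- by rewrite Ef; fld.
- exact: P0.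
- by rewrite Qc mulr1.
- exact: R0.
- exact: S0.
Qed.
End Main.

Theorem lemma2p5 (F : fieldType) (hF : [pchar F] =i pred0) (lam : F)
  (D : basis -> elt F) :
  odd_superder_deg0 lam D ->
  exists a b : F, forall (x c : basis),
    coef (D x) c = a * coef (br lam (kG, 0%Z) x) c + b * coef (br lam (kH, 0%Z) x) c.
Proof.
case=> hpar hdeg hL.
exact: (@main_sec F hF lam D hpar hdeg hL).
Qed.
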